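(* The functor sending a sesquiad $A$ to the pair $(A,R_A)$ (with $A$ identified with its image in $R_A$) is an equivalence of categories from the category of sesquiads to the category of monoidal pairs. An inverse is given by sending a monoidal pair $(A,R)$ to the monoid $A$ equipped with the addition defined by the inclusion $A\subset R$.
   Context: All rings are commutative with $1$; monoids are commutative with $1$ and a zero element. A sesquiad is a monoid $A$ with an addition: partially defined sums $\sum_jk_ja_j$ ($k\in\mathbb Z^n$, $n\ge 2$) which come from an injective monoid morphism $\varphi:A\to R$ into a ring with $\varphi(0)=0$, such a sum being defined exactly when $\sum_jk_j\varphi(a_j)\in\varphi(A)$ and then equal to its preimage. Sesquiad morphisms are monoid morphisms preserving defined sums. $R_A=\mathbb ZA/I(A)$ is the universal ring ($I(A)$ generated by the relations expressing the defined sums). A monoidal pair is a pair $(A,R)$ of a ring $R$ and a multiplicative submonoid $A\subset R$ containing $0$ which generates $R$ as a ring; a morphism $(A,R)\to(B,S)$ is a ring homomorphism $R\to S$ mapping $A$ into $B$. *)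

(* Defs.v *)
From HB Require Import structures.
From mathcomp Require Import all_boot all_order all_algebra.
From Stdlib Require Import ProofIrrelevance.
Set Implicit Arguments. Unset Strict Implicit. Unset Printing Implicit Defensive.
Import GRing.Theory.
Local Open Scope ring_scope.

(* A formal sum  sum_j k_j a_j  is represented by the sequence [:: (k_1,a_1); ...; (k_n,a_n)],
   k_j : int.  Its value under phi : A -> R is  \sum_j phi(a_j) *~ k_j. *)
Definition fsum (T : Type) (R : comPzRingType) (phi : T -> R) (s : seq (int * T)) : R :=
  \sum_(p <- s) phi p.2 *~ p.1.

(* Sesquiad: commutative monoid with 1 and 0, together with partially defined sums
   (ssum s b  means "the sum s (of length n >= 2) is defined and equals b") which come
   from some injective monoid morphism phi into a (commutative) ring with phi 0 = 0. *)
Record sesquiad := Sesquiad {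
  scar :> Type;
  smul : scar -> scar -> scar;
  sone : scar;
  szero : scar;
  smulA : forall a b c, smul a (smul b c) = smul (smul a b) c;
  smulC : forall a b, smul a b = smul b a;
  smul1 : forall a, smul sone a = a;
  smul0 : forall a, smul szero a = szero;
  ssum : seq (int * scar) -> scar -> Prop;
  ssum_repr : exists (R : comPzRingType) (phi : scar -> R),
    [/\ injective phi,
        (forall a b, phi (smul a b) = phi a * phi b),
        phi sone = 1,
        phi szero = 0 &
        forall s b, ssum s b <-> ((1 < size s)%N /\ fsum phi s = phi b)]
}.

Definition sesq_morph (A B : sesquiad) (f : A -> B) : Prop :=
  [/\ (forall a b, f (smul a b) = smul (f a) (f b)),
      f (sone A) = sone B,
      f (szero A) = szero B &
      forall s b, ssum s b -> ssum [seq (p.1, f p.2) | p <- s] (f b)].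

(* Maps A -> S that kill the relations defining I(A) in ZA (i.e. that factor through R_A). *)
Definition sesq_ring_map (A : sesquiad) (S : comPzRingType) (g : A -> S) : Prop :=
  [/\ (forall a b, g (smul a b) = g a * g b),
      g (sone A) = 1 &
      forall s b, ssum s b -> g b = fsum g s].

(* (R, iota) is the universal ring R_A = ZA / I(A) of A (characterised by its
   universal property, i.e. presentation by generators and relations). *)
Definition universal_ring (A : sesquiad) (R : comPzRingType) (iota : A -> R) : Prop :=
  sesq_ring_map iota /\
  forall (S : comPzRingType) (g : A -> S), sesq_ring_map g ->
    exists h : {rmorphism R -> S},
      (forall a, h (iota a) = g a) /\
      forall h' : {rmorphism R -> S}, (forall a, h' (iota a) = g a) -> h' =1 h.

Definition ring_generates (R : comPzRingType) (P : R -> Prop) : Prop :=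
  forall S : R -> Prop,
    S 1 -> (forall x y, S x -> S y -> S (x - y)) -> (forall x y, S x -> S y -> S (x * y)) ->
    (forall x, P x -> S x) -> forall x, S x.

Definition monoidal_pair (R : comPzRingType) (P : R -> Prop) : Prop :=
  [/\ P 0, P 1, (forall x y, P x -> P y -> P (x * y)) & ring_generates P].

Definition mpair_morph (R S : comPzRingType) (P : R -> Prop) (Q : S -> Prop)
  (h : {rmorphism R -> S}) : Prop := forall x, P x -> Q (h x).

Section Induced.
Variables (R : comPzRingType) (P : R -> Prop) (HP : monoidal_pair P).

Let PT := {x : R | P x}.

Lemma ind_eq (x y : PT) : proj1_sig x = proj1_sig y -> x = y.
Proof.
case: x => x Px; case: y => y Py /= E; subst y; by rewrite (proof_irrelevance _ Px Py).
Qed.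

Let P0 : P 0. Proof. by case: HP. Qed.
Let P1 : P 1. Proof. by case: HP. Qed.
Let PM x y : P x -> P y -> P (x * y). Proof. by case: HP => _ _ H _; apply: H. Qed.

Definition ind_mul (x y : PT) : PT :=
  exist _ (proj1_sig x * proj1_sig y) (PM (proj2_sig x) (proj2_sig y)).
Definition ind_one : PT := exist _ 1 P1.
Definition ind_zero : PT := exist _ 0 P0.
Definition ind_sum (s : seq (int * PT)) (b : PT) : Prop :=
  (1 < size s)%N /\ fsum (fun x : PT => proj1_sig x) s = proj1_sig b.

Lemma ind_repr : exists (R' : comPzRingType) (phi : PT -> R'),
    [/\ injective phi,
        (forall a b, phi (ind_mul a b) = phi a * phi b),
        phi ind_one = 1,
        phi ind_zero = 0 &
        forall s b, ind_sum s b <-> ((1 < size s)%N /\ fsum phi s = phi b)].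
Proof.
exists R, (fun x : PT => proj1_sig x); split => //.
by move=> x y; apply: ind_eq.
Qed.

Lemma ind_mulA (a b c : PT) : ind_mul a (ind_mul b c) = ind_mul (ind_mul a b) c.
Proof. by apply: ind_eq; rewrite /= mulrA. Qed.
Lemma ind_mulC (a b : PT) : ind_mul a b = ind_mul b a.
Proof. by apply: ind_eq; rewrite /= mulrC. Qed.
Lemma ind_mul1 (a : PT) : ind_mul ind_one a = a.
Proof. by apply: ind_eq; rewrite /= mul1r. Qed.
Lemma ind_mul0 (a : PT) : ind_mul ind_zero a = ind_zero.
Proof. by apply: ind_eq; rewrite /= mul0r. Qed.

Definition induced_sesquiad : sesquiad :=
  @Sesquiad PT ind_mul ind_one ind_zero ind_mulA ind_mulC ind_mul1 ind_mul0
    ind_sum ind_repr.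
End Induced.

(* Main.v *)
Require Import Defs.
From HB Require Import structures.
From mathcomp Require Import all_boot all_order all_algebra.
From mathcomp Require Import boolp.
From Stdlib Require Import ProofIrrelevance ClassicalEpsilon FunctionalExtensionality PropExtensionality.
Set Implicit Arguments. Unset Strict Implicit. Unset Printing Implicit Defensive.
Import GRing.Theory.
Local Open Scope ring_scope.

Section Fsum.
Variables (T : Type).
Definition lneg (s : seq (int * T)) := [seq (- p.1, p.2) | p <- s].
Definition lmul (m : T -> T -> T) (s t : seq (int * T)) :=
  [seq (p.1 * q.1, m p.2 q.2) | p <- s, q <- t].

Lemma fsum_cat (R : comPzRingType) (phi : T -> R) s t :
  fsum phi (s ++ t) = fsum phi s + fsum phi t.
Proof. by rewrite /fsum big_cat. Qed.
Lemma fsum_nil (R : comPzRingType) (phi : T -> R) : fsum phi [::] = 0.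
Proof. by rewrite /fsum big_nil. Qed.
Lemma fsum1 (R : comPzRingType) (phi : T -> R) k a : fsum phi [:: (k, a)] = phi a *~ k.
Proof. by rewrite /fsum big_seq1. Qed.
Lemma fsum_neg (R : comPzRingType) (phi : T -> R) s : fsum phi (lneg s) = - fsum phi s.
Proof. rewrite /fsum big_map -sumrN; apply: eq_bigr => p _ /=; by rewrite mulrNz. Qed.
Lemma fsum_mul (R : comPzRingType) (phi : T -> R) m s t :
  (forall a b, phi (m a b) = phi a * phi b) ->
  fsum phi (lmul m s t) = fsum phi s * fsum phi t.
Proof.
move=> Hm; rewrite /fsum /lmul big_allpairs_dep /= mulr_suml.
apply: eq_bigr => p _; rewrite mulr_sumr; apply: eq_bigr => q _ /=.
by rewrite Hm mulrzAl mulrzAr -mulrzA mulrC [(q.1 * _)%R]mulrC.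
Qed.
Lemma fsum_rmorph (R S : comPzRingType) (h : {rmorphism R -> S}) (phi : T -> R) s :
  h (fsum phi s) = fsum (fun x => h (phi x)) s.
Proof. rewrite /fsum rmorph_sum; apply: eq_bigr => p _; by rewrite rmorphMz. Qed.
Lemma fsum_ext (R : comPzRingType) (phi psi : T -> R) s :
  phi =1 psi -> fsum phi s = fsum psi s.
Proof. by move=> E; rewrite /fsum; apply: eq_bigr => p _; rewrite E. Qed.
End Fsum.

Lemma fsum_map (T U : Type) (R : comPzRingType) (phi : U -> R) (f : T -> U) s :
  fsum phi [seq (p.1, f p.2) | p <- s] = fsum (fun x => phi (f x)) s.
Proof. by rewrite /fsum big_map. Qed.

Section Quot.
Variable A : sesquiad.
Definition QT := seq (int * A).
Definition QE (s t : QT) : Prop := forall (S : comPzRingType) (g : A -> S),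
  sesq_ring_map g -> fsum g s = fsum g t.
Definition Qc := {P : QT -> Prop | exists x, P = QE x}.
HB.instance Definition _ := gen_eqMixin Qc.
HB.instance Definition _ := gen_choiceMixin Qc.
Definition cls (x : QT) : Qc := exist _ (QE x) (ex_intro _ x erefl).
Definition rep (q : Qc) : QT := proj1_sig (constructive_indefinite_description _ (proj2_sig q)).
Lemma rep_spec q : proj1_sig q = QE (rep q).
Proof. exact: (proj2_sig (constructive_indefinite_description _ (proj2_sig q))). Qed.
Lemma cls_rep q : cls (rep q) = q.
Proof.
case: q => P HP; rewrite /cls.
have E : QE (rep (exist _ P HP)) = P := esym (rep_spec (exist _ P HP)).
move: (ex_intro _ _ _) => H; move: H; rewrite E => H.
by rewrite (proof_irrelevance _ H HP).
Qed.
Lemma cls_eq x y : QE x y -> cls x = cls y.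
Proof.
move=> Exy.
have E : QE x = QE y.
  apply: functional_extensionality => z; apply: propositional_extensionality.
  split=> H S g Hg; [rewrite -(Exy S g Hg) | rewrite (Exy S g Hg)]; exact: H.
rewrite /cls; move: (ex_intro _ x _) (ex_intro _ y _); rewrite E => H1 H2.
by rewrite (proof_irrelevance _ H1 H2).
Qed.
Lemma rep_cls x : QE (rep (cls x)) x.
Proof.
have H0 := rep_spec (cls x); simpl in H0.
have : QE x (rep (cls x)) by rewrite H0.
by move=> H S g Hg; rewrite H.
Qed.

Definition ev (S : comPzRingType) (g : A -> S) (q : Qc) : S := fsum g (rep q).
Lemma evE S g (Hg : sesq_ring_map g) x : @ev S g (cls x) = fsum g x.
Proof. exact: rep_cls. Qed.
Lemma Qext q1 q2 : (forall S g, sesq_ring_map g -> @ev S g q1 = @ev S g q2) -> q1 = q2.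
Proof. by move=> H; rewrite -(cls_rep q1) -(cls_rep q2); apply: cls_eq. Qed.

Definition qadd q1 q2 := cls (rep q1 ++ rep q2).
Definition qopp q := cls (lneg (rep q)).
Definition qzero := cls [::].
Definition qmul q1 q2 := cls (lmul (@smul A) (rep q1) (rep q2)).
Definition qone := cls [:: (1%Z, sone A)].

Section EvL.
Variables (S : comPzRingType) (g : A -> S) (Hg : sesq_ring_map g).
Lemma ev_add q1 q2 : ev g (qadd q1 q2) = ev g q1 + ev g q2.
Proof. by rewrite /qadd evE // fsum_cat. Qed.
Lemma ev_opp q : ev g (qopp q) = - ev g q.
Proof. by rewrite /qopp evE // fsum_neg. Qed.
Lemma ev_zero : ev g qzero = 0.
Proof. by rewrite /qzero evE // fsum_nil. Qed.
Lemma ev_mul q1 q2 : ev g (qmul q1 q2) = ev g q1 * ev g q2.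
Proof. case: Hg => Hm _ _; by rewrite /qmul evE // fsum_mul. Qed.
Lemma ev_one : ev g qone = 1.
Proof. case: Hg => _ H1 _; by rewrite /qone evE // fsum1 H1. Qed.
End EvL.

Ltac qsolve := apply: Qext; let Hg := fresh "Hg" in intros ? ? Hg;
  rewrite ?(ev_add Hg, ev_opp Hg, ev_zero Hg, ev_mul Hg, ev_one Hg).

Lemma qaddA : associative qadd. Proof. by move=> x y z; qsolve; rewrite addrA. Qed.
Lemma qaddC : commutative qadd. Proof. by move=> x y; qsolve; rewrite addrC. Qed.
Lemma qadd0 : left_id qzero qadd. Proof. by move=> x; qsolve; rewrite add0r. Qed.
Lemma qaddN : left_inverse qzero qopp qadd. Proof. by move=> x; qsolve; rewrite addNr. Qed.
HB.instance Definition _ := GRing.isZmodule.Build Qc qaddA qaddC qadd0 qaddN.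
Lemma qmulA : associative qmul. Proof. by move=> x y z; qsolve; rewrite mulrA. Qed.
Lemma qmulC : commutative qmul. Proof. by move=> x y; qsolve; rewrite mulrC. Qed.
Lemma qmul1 : left_id qone qmul. Proof. by move=> x; qsolve; rewrite mul1r. Qed.
Lemma qmulD : left_distributive qmul (+%R : Qc -> Qc -> Qc).
Proof. move=> x y z /=; by qsolve; rewrite mulrDl. Qed.
HB.instance Definition _ := GRing.Zmodule_isComPzRing.Build Qc qmulA qmulC qmul1 qmulD.

Definition qiota (a : A) : Qc := cls [:: (1%Z, a)].

Section EvM.
Variables (S : comPzRingType) (g : A -> S) (Hg : sesq_ring_map g).
Definition evm of sesq_ring_map g := ev g.
Lemma evm_zmod : zmod_morphism (evm Hg).
Proof. move=> x y; rewrite /evm /=. by rewrite (ev_add Hg) (ev_opp Hg). Qed.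
Lemma evm_mon : monoid_morphism (evm Hg).
Proof. split; [exact: ev_one | move=> x y; exact: ev_mul]. Qed.
HB.instance Definition _ := GRing.isZmodMorphism.Build Qc S (evm Hg) evm_zmod.
HB.instance Definition _ := GRing.isMonoidMorphism.Build Qc S (evm Hg) evm_mon.
Lemma evm_iota a : evm Hg (qiota a) = g a.
Proof. by rewrite /evm /qiota evE // fsum1. Qed.
End EvM.

Lemma qall (q : Qc) : q = fsum qiota (rep q).
Proof.
apply: Qext => S g Hg.
have -> : ev g (fsum qiota (rep q)) = evm Hg (fsum qiota (rep q)) by [].
rewrite fsum_rmorph /ev; apply: fsum_ext => a; exact/esym/evm_iota.
Qed.

Lemma qiota_map : sesq_ring_map qiota.
Proof.
split.
- move=> a b; apply: Qext => S g Hg.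
  rewrite (ev_mul Hg) /qiota !evE // !fsum1; by case: Hg => ->.
- apply: Qext => S g Hg; by rewrite (ev_one Hg).
- move=> s b Hs; rewrite [RHS](_ : _ = cls s).
    by apply: cls_eq => S g Hg; rewrite fsum1; case: Hg => _ _ H; rewrite (H _ _ Hs).
  apply: Qext => S g Hg; rewrite evE //.
  have -> : ev g (fsum qiota s) = evm Hg (fsum qiota s) by [].
  rewrite fsum_rmorph; apply: fsum_ext => a; exact: evm_iota.
Qed.

Lemma qiota_univ : universal_ring qiota.
Proof.
split; first exact: qiota_map.
move=> S g Hg; exists (evm Hg : {rmorphism Qc -> S}); split; first exact: evm_iota.
move=> h' Hh' q; rewrite (qall q) !fsum_rmorph; apply: fsum_ext => a.
rewrite Hh'; exact/esym/evm_iota.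
Qed.
End Quot.

Section Univ.
Variables (A : sesquiad) (R : comPzRingType) (iota : A -> R) (H : universal_ring iota).

Lemma univ_all x : exists s, x = fsum iota s.
Proof.
case: H => Hi Hu.
case: (Hu _ _ (qiota_map A)) => h [Hh _].
case: (Hu _ _ Hi) => h0 [_ Hun].
pose k : {rmorphism Qc A -> R} := evm Hi.
have Hk a : k (qiota a) = iota a by exact: evm_iota.
have E1 := Hun idfun (fun a => erefl).
have E2 := Hun (k \o h) (fun a => etrans (congr1 k (Hh a)) (Hk a)).
exists (rep (h x)).
transitivity (k (h x)); first by transitivity (h0 x); [exact: (E1 x) | exact: (esym (E2 x))].
rewrite {1}(qall (h x)) fsum_rmorph.
by apply: fsum_ext => a; exact: evm_iota.
Qed.

Lemma univ_inj : injective iota.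
Proof.
case: (ssum_repr A) => R0 [phi [Hinj Hm H1 H0 Hs]].
have Hp : sesq_ring_map phi.
  split => // s b /Hs [_ ->] //.
case: H => _ Hu; case: (Hu _ _ Hp) => h [Hh _].
by move=> a b E; apply: Hinj; rewrite -!Hh E.
Qed.

Lemma univ_sum s b : ssum s b <-> ((1 < size s)%N /\ fsum iota s = iota b).
Proof.
case: (ssum_repr A) => R0 [phi [Hinj Hm H1 H0 Hs]].
have Hp : sesq_ring_map phi.
  split => // s' b' /Hs [_ ->] //.
case: H => [[_ _ Hi] Hu]; case: (Hu _ _ Hp) => h [Hh _].
split.
- move=> Hsb; split; first by case: (Hs s b) => /(_ Hsb) [].
  by rewrite (Hi _ _ Hsb).
- move=> [Hsz E]; apply/Hs; split => //.
  by rewrite -Hh -E fsum_rmorph; apply: fsum_ext => a; rewrite Hh.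
Qed.

Lemma univ_zero : iota (szero A) = 0.
Proof.
have Hs : ssum [:: (1%Z, szero A); (1%Z, szero A)] (szero A).
  case: (ssum_repr A) => R0 [phi [Hinj Hm H1 H0 Hs]].
  apply/Hs; split => //; by rewrite /fsum !big_cons big_nil H0 !mulr1z !addr0.
case: H => [[_ _ Hi] _]; move: (Hi _ _ Hs).
rewrite /fsum !big_cons big_nil !mulr1z addr0 => E.
have := congr1 (fun z => z - iota (szero A)) E.
by rewrite /= subrr addrK.
Qed.

Lemma univ_mpair : monoidal_pair (fun x : R => exists a, x = iota a).
Proof.
case: H => [[Hm H1 _] _].
split.
- by exists (szero A); rewrite univ_zero.
- by exists (sone A); rewrite H1.
- by move=> x y [a ->] [b ->]; exists (smul a b); rewrite Hm.
- move=> S S1 SB SM SP x.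
  have S0 : S 0 by rewrite -(subrr (1 : R)); apply: SB.
  have SN y : S y -> S (- y) by move=> Sy; rewrite -sub0r; apply: SB.
  have SD y z : S y -> S z -> S (y + z).
    by move=> Sy Sz; rewrite -[z]opprK; apply: SB => //; apply: SN.
  have SZ y k : S y -> S (y *~ k).
    move=> Sy; have SMn n : S (y *+ n).
      by elim: n => [|n IH]; rewrite ?mulr0n // mulrS; apply: SD.
    destruct k as [n|n]; first exact: (SMn n).
    by rewrite NegzE mulrNz; apply: SN; exact: (SMn n.+1).
  case: (univ_all x) => s ->; elim: s => [|p s IH].
    by rewrite fsum_nil.
  rewrite /fsum big_cons; apply: SD => //; apply: SZ; apply: SP; by exists p.2.
Qed.
End Univ.

Section Ind.
Variables (R : comPzRingType) (P : R -> Prop) (HP : monoidal_pair P).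
Local Notation PS := (induced_sesquiad HP).
Local Notation pr := (fun x : PS => proj1_sig x).

Lemma pr_map : sesq_ring_map pr.
Proof. split => // s b [_ ->] //. Qed.

Lemma gen_all x : exists s : seq (int * PS), x = fsum pr s.
Proof.
case: HP => P0 P1 PM Pgen.
apply: (Pgen (fun x => exists s : seq (int * PS), x = fsum pr s)).
- exists [:: (1%Z, ind_one HP : PS)]; by rewrite fsum1.
- move=> x' y [s ->] [t ->]; exists (s ++ lneg t); by rewrite fsum_cat fsum_neg.
- move=> x' y [s ->] [t ->]; exists (lmul (@ind_mul R P HP) s t).
  by rewrite fsum_mul.
- move=> y Py; exists [:: (1%Z, exist P y Py : PS)]; by rewrite fsum1.
Qed.

Section H.
Variables (S : comPzRingType) (g : PS -> S) (Hg : sesq_ring_map g).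

Lemma g_zero : g (ind_zero HP) = 0.
Proof.
case: Hg => _ _ Hs.
have : @ssum PS [:: (1%Z, ind_zero HP : PS); (1%Z, ind_zero HP : PS)] (ind_zero HP).
  split => //; by rewrite /fsum !big_cons big_nil /= !mulr1z !addr0.
move/Hs; rewrite /fsum !big_cons big_nil !mulr1z addr0 => E.
have := congr1 (fun z => z - g (ind_zero HP)) E.
by rewrite /= subrr addrK => <-.
Qed.

Lemma g_wd s t : fsum pr s = fsum pr t -> fsum g s = fsum g t.
Proof.
move=> E; case: Hg => _ _ Hs.
pose u := s ++ lneg t ++ [:: (1%Z, ind_zero HP : PS); (1%Z, ind_zero HP : PS)].
have : @ssum PS u (ind_zero HP).
  split; first by rewrite /u !size_cat /= !addnS.
  rewrite /u !fsum_cat fsum_neg E addNKr /fsum !big_cons big_nil /=.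
  by rewrite !mulr1z !addr0.
move/Hs; rewrite /u !fsum_cat fsum_neg [fsum g [:: _; _]]/fsum !big_cons big_nil.
rewrite g_zero !mulr1z !addr0 => /esym/eqP; rewrite subr_eq0 => /eqP.
done.
Qed.

Definition hfun of sesq_ring_map g := fun x : R =>
  fsum g (proj1_sig (constructive_indefinite_description _ (gen_all x))).

Lemma hfunE s : hfun Hg (fsum pr s) = fsum g s.
Proof.
rewrite /hfun; case: (constructive_indefinite_description _ _) => t /= Ht.
by apply: g_wd; rewrite -Ht.
Qed.

Lemma hfun_zmod : zmod_morphism (hfun Hg).
Proof.
move=> x y; case: (gen_all x) => s ->; case: (gen_all y) => t ->.
by rewrite -fsum_neg -fsum_cat !hfunE fsum_cat fsum_neg.
Qed.
Lemma hfun_mon : monoid_morphism (hfun Hg).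
Proof.
have [Hm H1 _] := Hg; split.
- have -> : (1 : R) = fsum pr [:: (1%Z, ind_one HP : PS)] by rewrite fsum1.
  by rewrite hfunE fsum1 H1.
- move=> x y; case: (gen_all x) => s ->; case: (gen_all y) => t ->.
  rewrite -(@fsum_mul _ _ pr (@ind_mul R P HP)) // hfunE.
  by rewrite !hfunE fsum_mul.
Qed.
HB.instance Definition _ := GRing.isZmodMorphism.Build R S (hfun Hg) hfun_zmod.
HB.instance Definition _ := GRing.isMonoidMorphism.Build R S (hfun Hg) hfun_mon.
End H.

Lemma ind_univ : universal_ring pr.
Proof.
split; first exact: pr_map.
move=> S g Hg; exists (hfun Hg : {rmorphism R -> S}); split.
  move=> a; have -> : proj1_sig a = fsum pr [:: (1%Z, a)] by rewrite fsum1.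
  exact: (etrans (hfunE Hg _) (fsum1 _ _ _)).
move=> h' Hh' x; case: (gen_all x) => s ->.
rewrite fsum_rmorph; transitivity (fsum g s); last exact: (esym (hfunE Hg s)).
apply: fsum_ext => a; exact: Hh'.
Qed.
End Ind.

Theorem mainTheorem5 :
  (* (0) the universal ring R_A exists for every sesquiad A *)
  (forall A : sesquiad, exists (R : comPzRingType) (iota : A -> R), universal_ring iota)
  /\
  (* (1) F is well defined on objects: A -> R_A is injective, (iota(A), R_A) is a monoidal
         pair, and the addition induced on A by A \subset R_A is the given one
         (so G (F A) = A via iota) *)
  (forall (A : sesquiad) (R : comPzRingType) (iota : A -> R), universal_ring iota ->
     [/\ injective iota,
         monoidal_pair (fun x : R => exists a, x = iota a) &
         forall s b, ssum s b <-> ((1 < size s)%N /\ fsum iota s = iota b)])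
  /\
  (* (2) F on morphisms: each sesquiad morphism f induces a unique ring hom R_A -> R_B
         extending f *)
  (forall (A B : sesquiad) (RA RB : comPzRingType) (iA : A -> RA) (iB : B -> RB),
     universal_ring iA -> universal_ring iB ->
     forall f : A -> B, sesq_morph f ->
       exists h : {rmorphism RA -> RB},
         (forall a, h (iA a) = iB (f a)) /\
         forall h' : {rmorphism RA -> RB}, (forall a, h' (iA a) = iB (f a)) -> h' =1 h)
  /\
  (* (3) F is full and faithful: every morphism of monoidal pairs
         (iA(A), RA) -> (iB(B), RB) comes from a unique sesquiad morphism *)
  (forall (A B : sesquiad) (RA RB : comPzRingType) (iA : A -> RA) (iB : B -> RB),
     universal_ring iA -> universal_ring iB ->
     forall h : {rmorphism RA -> RB},
       mpair_morph (fun x : RA => exists a, x = iA a) (fun y : RB => exists b, y = iB b) h ->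
       exists f : A -> B,
         [/\ sesq_morph f,
             (forall a, h (iA a) = iB (f a)) &
             forall f' : A -> B, (forall a, h (iA a) = iB (f' a)) -> f' =1 f])
  /\
  (* (4) G on morphisms: restricting a morphism of monoidal pairs gives a sesquiad morphism *)
  (forall (R S : comPzRingType) (P : R -> Prop) (Q : S -> Prop)
          (HP : monoidal_pair P) (HQ : monoidal_pair Q) (h : {rmorphism R -> S}),
     mpair_morph P Q h ->
     exists f : induced_sesquiad HP -> induced_sesquiad HQ,
       sesq_morph f /\ forall x, proj1_sig (f x) = h (proj1_sig x))
  /\
  (* (5) F (G (P, R)) = (P, R): R is the universal ring of P with the induced addition,
         via the inclusion P \subset R *)
  (forall (R : comPzRingType) (P : R -> Prop) (HP : monoidal_pair P),
     universal_ring (fun x : induced_sesquiad HP => proj1_sig x)).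
Proof.
split.
  move=> A; exists (Qc A), (@qiota A); exact: qiota_univ.
split.
  move=> A R iota H; split; [exact: univ_inj H | exact: univ_mpair H | exact: univ_sum H].
split.
  move=> A B RA RB iA iB HA HB f [fm f1 f0 fs].
  case: (HB) => [[HmB H1B HsB] _].
  apply: (HA.2 _ (fun a => iB (f a))); split.
  - by move=> a b; rewrite fm HmB.
  - by rewrite f1 H1B.
  - move=> s b Hs; rewrite (HsB _ _ (fs _ _ Hs)); exact: (fsum_map iB f s).
split.
  move=> A B RA RB iA iB HA HB h Hh.
  have Ex a : exists b, h (iA a) = iB b.
    by case: (Hh (iA a) (ex_intro _ a erefl)) => b ->; exists b.
  pose f a := proj1_sig (constructive_indefinite_description _ (Ex a)).
  have Hf a : h (iA a) = iB (f a).
    exact: (proj2_sig (constructive_indefinite_description _ (Ex a))).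
  have injB := univ_inj HB.
  case: (HA) => [[HmA H1A HsA] _]; case: (HB) => [[HmB H1B HsB] _].
  exists f; split => //.
  - split.
    + by move=> a b; apply: injB; rewrite -Hf HmA rmorphM HmB !Hf.
    + by apply: injB; rewrite -Hf H1A rmorph1 H1B.
    + by apply: injB; rewrite -Hf !univ_zero // rmorph0.
    + move=> s b /(univ_sum HA) [sz E]; apply/(univ_sum HB); split.
        by rewrite size_map.
      by rewrite fsum_map -Hf -E fsum_rmorph; apply: fsum_ext => a; rewrite Hf.
  - by move=> f' Hf' a; apply: injB; rewrite -Hf Hf'.
split.
  move=> R S P Q HP HQ h Hh.
  exists (fun x : induced_sesquiad HP =>
    (exist Q (h (proj1_sig x)) (Hh _ (proj2_sig x)) : induced_sesquiad HQ)).
  split => //; split.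
  - by move=> a b; apply: ind_eq; rewrite /= rmorphM.
  - by apply: ind_eq; rewrite /= rmorph1.
  - by apply: ind_eq; rewrite /= rmorph0.
  - move=> s b [sz E]; split; first by rewrite size_map.
    rewrite /= -E fsum_rmorph /fsum big_map; exact: eq_bigr.
move=> R P HP; exact: ind_univ.
Qed.
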